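(* Let $R$ be a generalized Rickart $*$-ring and let $B$ be a $*$-subring of $R$ such that $B=B''$. Then (1) if $x\in B$, then $GRP(x)\in B$ (where $GRP(x)$ is a generalized right projection of $x$ in $R$); and (2) $B$ is a generalized Rickart $*$-ring.
   Context: A $*$-ring is an associative ring $R$ with an involution $x\mapsto x^*$ (additive, $(xy)^*=y^*x^*$, $x^{**}=x$); a $*$-subring is a subring closed under $*$. A projection is an element $e$ with $e=e^*=e^2$. For a nonempty $S\subseteq R$, the commutant is $S'=\{x\in R: xs=sx \text{ for all } s\in S\}$ and $S''=(S')'$. For $a$ in a ring $T$, $r(a)=\{b\in T: ab=0\}$. A $*$-ring $T$ is a generalized Rickart $*$-ring if for every $x\in T$ there exist a positive integer $n$ and a projection $g\in T$ with $r(x^n)=gT$. A projection $e\in R$ is a generalized right projection of $x\in R$, written $GRP(x)=e$, if there exists $n\in\mathbb N$ with $x^ne=x^n$ and, for all $y\in R$, $x^ny=0$ implies $ey=0$. *)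

(* Defs.v *)
From mathcomp Require Import all_boot all_algebra.
Set Implicit Arguments. Unset Strict Implicit. Unset Printing Implicit Defensive.
Import GRing.Theory.
Local Open Scope ring_scope.

Definition involution (R : pzRingType) (s : R -> R) : Prop :=
  [/\ forall x y, s (x + y) = s x + s y,
      forall x y, s (x * y) = s y * s x &
      forall x, s (s x) = x].

Definition star_subring (R : pzRingType) (s : R -> R) (B : R -> Prop) : Prop :=
  [/\ B 0, forall x y, B x -> B y -> B (x - y),
      forall x y, B x -> B y -> B (x * y) &
      forall x, B x -> B (s x)].

Definition projection (R : pzRingType) (s : R -> R) (e : R) : Prop :=
  e = s e /\ e * e = e.

Definition commutant (R : pzRingType) (S : R -> Prop) : R -> Prop :=
  fun x => forall y, S y -> x * y = y * x.

(* The *-subring T (as a subset of R, with the restricted operations) is a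
   generalized Rickart *-ring: for every x in T there exist n >= 1 and a
   projection g in T with r_T(x^n) = {b in T | x^n b = 0} = g T. *)
Definition gen_rickart (R : pzRingType) (s : R -> R) (T : R -> Prop) : Prop :=
  forall x, T x -> exists n : nat, exists g : R,
    [/\ (0 < n)%N, T g, projection s g &
        forall y, (T y /\ x ^+ n * y = 0) <-> (exists2 b, T b & y = g * b)].

Definition GRP (R : pzRingType) (s : R -> R) (x e : R) : Prop :=
  projection s e /\
  exists n : nat, [/\ (0 < n)%N, x ^+ n * e = x ^+ n &
                      forall y, x ^+ n * y = 0 -> e * y = 0].

(* Main.v *)
Require Import Defs.
From mathcomp Require Import all_boot all_algebra.
Local Open Scope ring_scope.
Import GRing.Theory.

Lemma part1 (R : pzRingType) (s : R -> R) (B : R -> Prop) :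
  involution s ->
  star_subring s B ->
  (forall x, B x <-> commutant (commutant B) x) ->
  (forall x e, B x -> GRP s x e -> B e).
Proof.
move=> [sD sM sK] [B0 BB BM BS] HB x e Bx [[se ee] [n [_ Hxe Hann]]].
apply/HB => y Hy.
have key : forall z, commutant B z -> e * z = e * z * e.
  move=> z Hz.
  have Hzx : GRing.comm z (x ^+ n) by apply: commrX; exact: Hz.
  have : x ^+ n * (z * (1 - e)) = 0.
    by rewrite mulrA -Hzx -mulrA mulrBr mulr1 Hxe subrr mulr0.
  move/Hann; rewrite mulrBr mulr1 mulrBr mulrA => /eqP; rewrite subr_eq0 => /eqP.
  move=> hh; exact hh.
have Hsy : commutant B (s y).
  move=> b Bb.
  have -> : s y * b = s (s b * y) by rewrite sM sK.
  by rewrite -Hy ?sM ?sK //; exact: BS.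
have h1 := key _ Hy.
have h2 := key _ Hsy.
have : s (e * s y) = s (e * s y * e) by rewrite -h2.
rewrite !sM sK -se => ->.
by rewrite mulrA -h1.
Qed.

Theorem mainTheorem5 (R : pzRingType) (s : R -> R) (B : R -> Prop) :
  involution s ->
  gen_rickart s (fun _ => True) ->
  star_subring s B ->
  (forall x, B x <-> commutant (commutant B) x) ->
  (forall x e, B x -> GRP s x e -> B e) /\ gen_rickart s B.
Proof.
move=> Hs HR HsB HB.
have P1 := @part1 _ _ _ Hs HsB HB.
split => //.
move: (Hs) (HsB) => [sD sM sK] [B0 BB BM BS].
have s0 : s 0 = 0.
  have := sD 0 0; rewrite addr0 => /(congr1 (fun t => t - s 0)); rewrite subrr addrK => h; by rewrite -h.
have sN : forall y, s (- y) = - s y.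
  by move=> y; apply/eqP; rewrite -subr_eq0 opprK -sD addNr s0.
have s1 : s 1 = 1.
  have := sM (s 1) 1; rewrite sK mulr1 sK => h.
  by rewrite -h.
have B1 : B 1 by apply/HB => y _; rewrite mul1r mulr1.
move=> x Bx.
have [n [g [n0 _ [sg gg] Hg]]] := HR x I.
have xg : x ^+ n * g = 0.
  have [] := (proj2 (Hg g)); first by exists 1 => //; rewrite mulr1.
  by [].
have Be : B (1 - g).
  apply: (P1 x) => //; split.
    by split; [rewrite sD sN s1 -sg | rewrite mulrBr mulr1 !mulrBl gg mul1r subrr subr0].
  exists n; split => //; first by rewrite mulrBr mulr1 xg subr0.
  move=> y /(fun h => proj1 (Hg y) (conj I h)) [b _ ->].
  by rewrite mulrA mulrBl mul1r gg subrr mul0r.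
have Bg : B g by have := BB _ _ B1 Be; rewrite opprB addrC subrK.
exists n, g; split => // y; split.
  move=> [By hy]; exists y => //.
  have [b _ ->] := proj1 (Hg y) (conj I hy).
  by rewrite mulrA gg.
move=> [b Bb ->]; split; first exact: BM.
by rewrite mulrA xg mul0r.
Qed.
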